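(* Fix $\alpha\in(0,1)$ and define, for $t\in\mathbb N^*$, \[ \gamma_0(t,\alpha)=\frac{t^2}{\left(\frac{\alpha^2}{t+1}\right)^{1/t}(t+1)-1}-t. \] Then, as $t\to\infty$, $\gamma_0(t,\alpha)=2\log(1/\alpha)+\log(t+1)+o(1)$. *)

(* Defs.v *)
From Stdlib Require Import Reals.
From Coquelicot Require Import Coquelicot.
Open Scope R_scope.

Definition gamma0 (t : nat) (alpha : R) : R :=
  (INR t) ^ 2 /
    (Rpower (alpha ^ 2 / (INR t + 1)) (1 / INR t) * (INR t + 1) - 1)
  - INR t.

(* Main.v *)
Require Import Defs.
From Stdlib Require Import Reals.
From Coquelicot Require Import Coquelicot.
From Stdlib Require Import Lra Psatz.
Open Scope R_scope.

Lemma core (t M E : R) : 1 <= t -> 0 < M -> 4*M <= t -> 1 - M/t <= E ->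
  E <= 1 - M/t + (M/t)^2 ->
  Rabs (t^2/(E*(t+1) - 1) - t - M) <= 8*(1+M)^2/t.
Proof.
  intros Ht HM H4 HE1 HE2.
  set (x := M/t) in *.
  assert (Hx : M = t*x) by (unfold x; field; lra).
  assert (Hx0 : 0 < x) by (unfold x; apply Rdiv_lt_0_compat; lra).
  assert (Hx1 : x <= 1/4) by (unfold x; apply Rmult_le_reg_r with t; [lra|]; field_simplify; lra).
  set (r := E - 1 + x).
  assert (Hr0 : 0 <= r) by (unfold r; lra).
  assert (Hr1 : r <= x^2) by (unfold r; lra).
  assert (HE : E = 1 - x + r) by (unfold r; lra).
  clearbody r x. rewrite HE. subst M.
  set (D := (1 - x + r) * (t + 1) - 1).
  assert (HD : t/2 <= D) by (unfold D; nra).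
  set (N := t^2 - (t + t*x) * D).
  assert (Heq : t ^ 2 / D - t - t * x = N / D) by (unfold N; field; lra).
  rewrite Heq.
  assert (HN : Rabs N <= 4 * (1 + t*x)^2).
  { unfold N, D. apply Rabs_le.
    assert (HP : 0 <= t*(t+1)*r <= 2*(t*x)^2).
    { assert (0 <= t*(t+1)) by nra. split; [nra|].
      apply Rle_trans with (t*(t+1)*x^2); [apply Rmult_le_compat_l; lra|].
      assert (0 <= x^2) by nra. nra. }
    replace (t ^ 2 - (t + t * x) * ((1 - x + r) * (t + 1) - 1)) with
      ((t*x)^2 + t*x + (t*x)*x - (1+x)*(t*(t+1)*r)) by ring.
    set (P := t*(t+1)*r) in *. set (M := t*x) in *.
    assert (0 <= M) by (unfold M; nra).
    split; nra. }
  rewrite Rabs_div by lra.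
  rewrite (Rabs_right D) by lra.
  apply Rle_trans with (4 * (1 + t*x)^2 / (t/2)).
  - unfold Rdiv. apply Rmult_le_compat; try lra.
    + apply Rabs_pos.
    + left; apply Rinv_0_lt_compat; lra.
    + apply Rinv_le_contravar; lra.
  - right; field; lra.
Qed.

Lemma ln_gt_0 x : 1 < x -> 0 < ln x.
Proof. intro H. rewrite <- ln_1. apply ln_increasing; lra. Qed.

Lemma is_lim_seq_scal_l' (u : nat -> R) (a l : R) :
  is_lim_seq u l -> is_lim_seq (fun n => a * u n) (a * l).
Proof. intro H. exact (is_lim_seq_scal_l u a l H). Qed.

Definition sq (n : nat) : R := INR (S n) + 1.

Lemma sq_pos n : 2 <= sq n.
Proof. unfold sq. rewrite S_INR. pose proof (pos_INR n). lra. Qed.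

Lemma lim_s : is_lim_seq sq p_infty.
Proof.
  apply is_lim_seq_le_p_loc with INR; [|exact is_lim_seq_INR].
  exists 0%nat. intros n _. unfold sq. rewrite S_INR. lra.
Qed.

Lemma lim_inv : is_lim_seq (fun n => / sq n) 0.
Proof.
  apply (is_lim_seq_inv sq p_infty lim_s). discriminate.
Qed.

Lemma lim1 : is_lim_seq (fun n => ln (sq n) / sq n) 0.
Proof.
  apply (is_lim_comp_seq (fun y => ln y / y) sq p_infty 0).
  - exact is_lim_div_ln_p.
  - exists 0%nat. intros; discriminate.
  - exact lim_s.
Qed.

Lemma lim2 : is_lim_seq (fun n => ln (sq n) ^ 2 / sq n) 0.
Proof.
  assert (Hz : is_lim_seq (fun n => sqrt (sq n)) p_infty).
  { apply (is_lim_comp_seq (fun y => sqrt y) sq p_infty p_infty).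
    - apply (is_lim_sqrt_p (fun y => y)). apply is_lim_id.
    - exists 0%nat. intros; discriminate.
    - exact lim_s. }
  assert (H1 : is_lim_seq (fun n => ln (sqrt (sq n)) / sqrt (sq n)) 0).
  { apply (is_lim_comp_seq (fun y => ln y / y) _ p_infty 0).
    - exact is_lim_div_ln_p.
    - exists 0%nat. intros; discriminate.
    - exact Hz. }
  apply is_lim_seq_ext with
    (fun n => 4 * ((ln (sqrt (sq n)) / sqrt (sq n)) * (ln (sqrt (sq n)) / sqrt (sq n)))).
  - intro n. pose proof (sq_pos n).
    assert (Hs : 0 < sqrt (sq n)) by (apply sqrt_lt_R0; lra).
    assert (Hq : sqrt (sq n) * sqrt (sq n) = sq n) by (apply sqrt_sqrt; lra).
    set (z := sqrt (sq n)) in *.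
    assert (Hl : ln (sq n) = 2 * ln z) by (rewrite <- Hq; rewrite ln_mult by lra; ring).
    rewrite Hl, <- Hq. field. lra.
  - replace (Finite 0) with (Rbar_mult 4 (Finite (0 * 0))) by (simpl; f_equal; ring).
    apply is_lim_seq_scal_l. apply is_lim_seq_mult'; exact H1.
Qed.

Theorem proposition1 (alpha : R) (Ha0 : 0 < alpha) (Ha1 : alpha < 1) :
  is_lim_seq
    (fun n : nat =>
       gamma0 (S n) alpha - (2 * ln (1 / alpha) + ln (INR (S n) + 1)))
    0.
Proof.
  set (K := 2 * ln (1 / alpha)).
  assert (HK : 0 < K).
  { unfold K. assert (0 < ln (1/alpha)); [|lra]. apply ln_gt_0.
    unfold Rdiv. rewrite Rmult_1_l. rewrite <- Rinv_1. apply Rinv_lt_contravar; lra. }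
  set (g := fun n => 16 * (1+K)^2 * (/ sq n) + 32 * (1+K) * (ln (sq n) / sq n)
                     + 16 * (ln (sq n) ^ 2 / sq n)).
  assert (Hg : is_lim_seq g 0).
  { unfold g.
    replace 0 with (16 * (1+K)^2 * 0 + 32 * (1+K) * 0 + 16 * 0) by ring.
    apply is_lim_seq_plus'; [apply is_lim_seq_plus'|];
      apply is_lim_seq_scal_l'; [exact lim_inv|exact lim1|exact lim2]. }
  assert (Hev : eventually (fun n => (K + ln (sq n)) / sq n < 1/8)).
  { assert (Hl : is_lim_seq (fun n => K * / sq n + ln (sq n) / sq n) 0).
    { replace 0 with (K * 0 + 0) by ring.
      apply is_lim_seq_plus'; [apply is_lim_seq_scal_l'; exact lim_inv | exact lim1]. }
    apply is_lim_seq_spec in Hl.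
    assert (He : 0 < 1/8) by lra.
    destruct (Hl (mkposreal _ He)) as [N HN].
    exists N. intros n Hn. specialize (HN n Hn). simpl in HN.
    pose proof (sq_pos n).
    replace ((K + ln (sq n)) / sq n) with (K * / sq n + ln (sq n) / sq n) by (field; lra).
    apply Rabs_def2 in HN. lra. }
  apply is_lim_seq_le_le_loc with (fun n => - g n) g; [|
    replace (Finite 0) with (Rbar_opp 0) by (simpl; f_equal; ring);
    apply -> is_lim_seq_opp; exact Hg | exact Hg].
  destruct Hev as [N HN]. exists N. intros n Hn. specialize (HN n Hn).
  pose proof (sq_pos n) as Hs.
  assert (Hln : 0 < ln (sq n)) by (apply ln_gt_0; lra).
  fold (sq n).
  set (t := INR (S n)) in *.
  assert (Hst : sq n = t + 1) by reflexivity.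
  set (M := K + ln (sq n)) in *.
  assert (HM : 0 < M) by (unfold M; lra).
  assert (Ht : 1 <= t) by lra.
  assert (H4 : 4 * M <= t).
  { apply Rmult_lt_compat_r with (r := sq n) in HN; [|lra].
    unfold Rdiv in HN. rewrite Rmult_assoc, Rinv_l in HN by lra. lra. }
  assert (Hgam : gamma0 (S n) alpha = t^2 / (exp (- (M/t)) * (t+1) - 1) - t).
  { unfold gamma0. fold t. f_equal. f_equal. f_equal. f_equal.
    unfold Rpower. f_equal.
    rewrite ln_div by (try apply pow_lt; lra).
    rewrite ln_pow by lra.
    unfold M, K. rewrite <- Hst.
    unfold Rdiv at 3. rewrite Rmult_1_l, ln_Rinv by lra. simpl. field. lra. }
  rewrite Hgam. fold K. rewrite <- Hst. fold M.
  assert (HE1 : 1 - M/t <= exp (- (M/t))).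
  { pose proof (exp_ineq1_le (- (M/t))). lra. }
  assert (HE2 : exp (- (M/t)) <= 1 - M/t + (M/t)^2).
  { assert (Hx : 0 < M/t) by (apply Rdiv_lt_0_compat; lra).
    pose proof (exp_ineq1_le (M/t)).
    rewrite exp_Ropp.
    apply Rmult_le_reg_r with (exp (M/t)); [apply exp_pos|].
    rewrite Rinv_l by (apply Rgt_not_eq, exp_pos).
    assert (0 <= 1 - M/t + (M/t)^2) by nra.
    apply Rle_trans with ((1 - M/t + (M/t)^2) * (1 + M/t)); [nra|].
    apply Rmult_le_compat_l; lra. }
  pose proof (core t M (exp (- (M/t))) Ht HM H4 HE1 HE2) as Hc.
  apply Rabs_le_between in Hc.
  assert (Hb : 8 * (1 + M)^2 / t <= g n).
  { unfold g, M. rewrite Hst.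
    apply Rle_trans with (16 * (1 + (K + ln (t+1)))^2 / (t+1)).
    - set (X := (1 + (K + ln (t + 1))) ^ 2).
      assert (0 <= X) by (unfold X; apply pow2_ge_0).
      replace (8 * X / t) with (X * (8 / t)) by (field; lra).
      replace (16 * X / (t+1)) with (X * (16 / (t+1))) by (field; lra).
      apply Rmult_le_compat_l; [lra|].
      apply Rmult_le_reg_r with (t * (t+1)); [nra|].
      replace (8 / t * (t * (t + 1))) with (8 * (t+1)) by (field; lra).
      replace (16 / (t+1) * (t * (t + 1))) with (16 * t) by (field; lra).
      lra.
    - right. field. lra. }
  rewrite Hst. lra.
Qed.
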